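(* Let $x$ be a non-negative integer, $w$ a positive integer, and let $N_c$ be the least period of the sequence $(T_n^i(x)\bmod p^w)_{i\ge0}$. If $N_c\ge p^2$, then for every integer $k\ge w$ the least period of the sequence $(T_n^i(x)\bmod p^k)_{i\ge0}$ equals $N_c\cdot p^{k-w}$.
   Context: $p$ is a prime with $p>3$ and $n>1$ is an integer with $\gcd(n,p)=\gcd(n,p^2-1)=1$ (so $T_n$ permutes $\mathbb{Z}_{p^j}$ for all $j\ge1$). $T_n(x)\in\mathbb{Z}[x]$ is the Chebyshev polynomial of the first kind: $T_0=1$, $T_1=x$, $T_d=2xT_{d-1}-T_{d-2}$. $T_n^i$ is the $i$-fold composition of $T_n$ ($T_n^0(x)=x$). The least period of $(T_n^i(x)\bmod p^j)_{i\ge0}$ is the least positive integer $N$ with $T_n^N(x)\equiv x\pmod{p^j}$. *)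

(* Defs.v *)
From HB Require Import structures.
From mathcomp Require Import all_boot all_order all_algebra.
Set Implicit Arguments. Unset Strict Implicit. Unset Printing Implicit Defensive.
Import Order.TTheory GRing.Theory Num.Theory.
Local Open Scope ring_scope.

(* Chebyshev polynomials of the first kind over int:
   cheb_pair d = (T_d, T_{d+1}), with T_0 = 1, T_1 = X,
   T_{d} = 2 X T_{d-1} - T_{d-2}. *)
Fixpoint cheb_pair (d : nat) : {poly int} * {poly int} :=
  match d with
  | 0 => (1, 'X)
  | d'.+1 => let: (a, b) := cheb_pair d' in (b, 2%:R * 'X * b - a)
  end.

Definition chebT (d : nat) : {poly int} := (cheb_pair d).1.

Definition chebIter (n i : nat) (x : int) : int := iter i (fun y => (chebT n).[y]) x.

Definition least_period (n : nat) (x : int) (m : nat) (N : nat) : Prop :=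
  (0 < N)%N /\ (chebIter n N x == x %[mod (m%:Z)])%Z /\
  forall M : nat, (0 < M)%N -> (M < N)%N -> ~~ (chebIter n M x == x %[mod (m%:Z)])%Z.

(* Main.v *)
Require Import Defs.
From mathcomp Require Import all_boot all_order all_algebra.
From mathcomp Require Import ring zify.
Set Implicit Arguments. Unset Strict Implicit. Unset Printing Implicit Defensive.
Import Order.TTheory GRing.Theory Num.Theory.
Local Open Scope ring_scope.

Lemma PoszX (m k : nat) : Posz (m ^ k)%N = (Posz m) ^+ k.
Proof. elim: k => [|k IH] //; by rewrite expnS PoszM IH exprS. Qed.

Lemma dvdE (d m : int) : (d %| m)%Z <-> exists q, m = q * d.
Proof. by split => /dvdzP. Qed.

Lemma taylor (P : {poly int}) (y h : int) :
  (h ^+ 2 %| P.[y + h] - P.[y] - P^`().[y] * h)%Z.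
Proof.
elim/poly_ind: P => [|Q c IH].
  by rewrite deriv0 !horner0 mul0r !subr0 dvdz0.
rewrite derivMXaddC !hornerMXaddC hornerD hornerM hornerX.
move/dvdE: IH => [k Hk].
have -> : Q.[y + h] = k * h ^+ 2 + Q.[y] + Q^`().[y] * h by rewrite -Hk; ring.
apply/dvdE; exists (Q^`().[y] + k * (y + h)); ring.
Qed.

Lemma cong_poly (P : {poly int}) (m a b : int) :
  (m %| a - b)%Z -> (m %| P.[a] - P.[b])%Z.
Proof.
move=> /dvdE [q Hq].
have E : b + (a - b) = a by ring.
have := taylor P b (a - b); rewrite E => /dvdE [k Hk].
have -> : P.[a] - P.[b] = k * (a - b) ^+ 2 + P^`().[b] * (a - b) by rewrite -Hk; ring.
apply/dvdE; exists (k * q * (a - b) + P^`().[b] * q); rewrite Hq; ring.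
Qed.

Definition gd (n : nat) (y : int) : int := ((chebT n)^`()).[y].

Fixpoint mult (n N : nat) (y : int) : int :=
  match N with 0 => 1 | N'.+1 => gd n (chebIter n N' y) * mult n N' y end.

Lemma chebIterS n N y : chebIter n N.+1 y = (chebT n).[chebIter n N y].
Proof. by []. Qed.

Lemma chebIter0 n y : chebIter n 0 y = y.
Proof. by []. Qed.

Lemma chebIterD n a b y : chebIter n (a + b) y = chebIter n a (chebIter n b y).
Proof. by rewrite /chebIter iterD. Qed.

Lemma D_iter n N (y h : int) :
  (h ^+ 2 %| chebIter n N (y + h) - chebIter n N y - mult n N y * h)%Z.
Proof.
elim: N => [|N IH]; first by rewrite /= mul1r (_ : y + h - y - h = 0) ?dvdz0 //; ring.
move/dvdE: IH => [k Hk].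
have He : chebIter n N (y + h) = chebIter n N y + (mult n N y * h + k * h ^+ 2)
  by rewrite -Hk; ring.
have := taylor (chebT n) (chebIter n N y) (mult n N y * h + k * h ^+ 2).
move/dvdE => [q Hq].
rewrite !chebIterS He /= -/(gd n _).
have -> : (chebT n).[chebIter n N y + (mult n N y * h + k * h ^+ 2)] =
   q * (mult n N y * h + k * h ^+ 2) ^+ 2 + (chebT n).[chebIter n N y]
   + gd n (chebIter n N y) * (mult n N y * h + k * h ^+ 2) by rewrite -Hq /gd; ring.
apply/dvdE; exists (q * (mult n N y + k * h) ^+ 2 + gd n (chebIter n N y) * k); ring.
Qed.

Lemma cong_iter n N (m a b : int) :
  (m %| a - b)%Z -> (m %| chebIter n N a - chebIter n N b)%Z.
Proof.
move=> H; have := D_iter n N b (a - b).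
have E : b + (a - b) = a by ring. rewrite E => /dvdE [k Hk].
have -> : chebIter n N a - chebIter n N b = k * (a - b) ^+ 2 + mult n N b * (a - b)
  by rewrite -Hk; ring.
move/dvdE: H => [q ->].
apply/dvdE; exists (k * q * (q * m) + mult n N b * q); ring.
Qed.

Lemma dvd_mulcong (m a b c d : int) :
  (m %| a - b)%Z -> (m %| c - d)%Z -> (m %| a * c - b * d)%Z.
Proof.
move=> /dvdE [q1 H1] /dvdE [q2 H2].
have -> : a * c - b * d = (a - b) * c + b * (c - d) by ring.
rewrite H1 H2; apply/dvdE; exists (q1 * c + b * q2); ring.
Qed.

Lemma cong_mult n N (m a b : int) :
  (m %| a - b)%Z -> (m %| mult n N a - mult n N b)%Z.
Proof.
move=> H; elim: N => [|N IH] /=; first by rewrite subrr dvdz0.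
apply: dvd_mulcong => //. rewrite /gd; apply: cong_poly; exact: cong_iter.
Qed.

Lemma multD n a b y : mult n (b + a) y = mult n b (chebIter n a y) * mult n a y.
Proof.
elim: b => [|b IH] /=; first by rewrite mul1r.
by rewrite IH chebIterD mulrA.
Qed.

Lemma iter_period n N t (m x : int) :
  (m %| chebIter n N x - x)%Z -> (m %| chebIter n (N * t) x - x)%Z.
Proof.
move=> H; elim: t => [|t IH]; first by rewrite muln0 subrr dvdz0.
rewrite mulnS chebIterD.
have -> : chebIter n N (chebIter n (N * t) x) - x =
  (chebIter n N (chebIter n (N * t) x) - chebIter n N x) + (chebIter n N x - x) by ring.
by rewrite rpredD // cong_iter.
Qed.

Lemma mult_pow n N t (m x : int) :
  (m %| chebIter n N x - x)%Z -> (m %| mult n (N * t) x - (mult n N x) ^+ t)%Z.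
Proof.
move=> H; elim: t => [|t IH]; first by rewrite muln0 expr0 subrr dvdz0.
rewrite mulnS multD exprS; apply: dvd_mulcong => //.
apply: cong_mult; exact: iter_period.
Qed.

Fixpoint S (A : int) (t : nat) : int :=
  match t with 0 => 0 | t'.+1 => 1 + A * S A t' end.

Lemma trans n N (x u q : int) : chebIter n N x - x = q * u ->
  forall t, (q ^+ 2 %| chebIter n (N * t) x - x - q * u * S (mult n N x) t)%Z.
Proof.
move=> Hu; elim=> [|t IH]; first by rewrite muln0 /= mulr0 !subrr dvdz0.
move/dvdE: IH => [k Hk].
rewrite mulnS chebIterD.
set y := chebIter n (N * t) x in Hk *.
set A := mult n N x in Hk *.
have Hy : y = x + (q * (u * S A t + k * q)).
  have -> : q * (u * S A t + k * q) = (y - x - q * u * S A t) + q * u * S A t by rewrite Hk; ring.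
  ring.
have := D_iter n N x (q * (u * S A t + k * q)); rewrite -Hy -/A => /dvdE [r Hr].
have -> : chebIter n N y = r * (q * (u * S A t + k * q)) ^+ 2 + chebIter n N x
   + A * (q * (u * S A t + k * q)) by rewrite -Hr; ring.
have -> : chebIter n N x = x + q * u by rewrite -Hu; ring.
apply/dvdE; exists (A * k + r * (u * S A t + k * q) ^+ 2) => /=; ring.
Qed.

Lemma S1 A t : (A - 1) * S A t = A ^+ t - 1.
Proof. elim: t => [|t IH] /=; first by rewrite mulr0 expr0 subrr.
by rewrite exprS mulrDr mulr1 mulrCA IH; ring. Qed.

Lemma S2 (P A : int) t : (P %| A - 1)%Z -> (P %| S A t - t%:Z)%Z.
Proof.
move=> H; elim: t => [|t IH] /=; first by rewrite subrr dvdz0.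
have -> : 1 + A * S A t - (t.+1)%:Z = (A - 1) * S A t + (S A t - t%:Z).
  rewrite -addn1 PoszD; ring.
by rewrite rpredD // dvdz_mulr.
Qed.

Lemma S3 (P s : int) t :
  (P ^+ 2 %| S (1 + P * s) t - t%:Z - P * s * ('C(t, 2))%:Z)%Z.
Proof.
elim: t => [|t IH] /=; first by rewrite bin0n subrr mulr0 subr0 dvdz0.
have -> : 1 + (1 + P * s) * S (1 + P * s) t - (t.+1)%:Z - P * s * ('C(t.+1, 2))%:Z
   = (S (1 + P * s) t - t%:Z - P * s * ('C(t, 2))%:Z) + P * s * (S (1 + P * s) t - t%:Z).
  rewrite binS bin1 -addn1 !PoszD; ring.
rewrite rpredD //.
have /dvdE [k ->] : (P %| S (1 + P * s) t - t%:Z)%Z.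
  apply: S2; apply/dvdE; exists s; ring.
apply/dvdE; exists (s * k); ring.
Qed.

Lemma lpE n x (m N : nat) : least_period n x m N <->
  [/\ (0 < N)%N, (Posz m %| chebIter n N x - x)%Z &
     forall M, (0 < M)%N -> (M < N)%N -> ~~ (Posz m %| chebIter n M x - x)%Z].
Proof.
rewrite /least_period eqz_mod_dvd; split => [[H1 [H2 H3]]|[H1 H2 H3]]; split => //.
  by move=> M M0 MN; rewrite -eqz_mod_dvd; apply: H3.
by split => // M M0 MN; rewrite eqz_mod_dvd; apply: H3.
Qed.

Lemma lp_dvd n x (m N M : nat) : least_period n x m N ->
  (Posz m %| chebIter n M x - x)%Z -> (N %| M)%N.
Proof.
move/lpE => [N0 HN Hmin] HM.
have E : M = (M %% N + N * (M %/ N))%N by rewrite mulnC addnC -divn_eq.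
have Hr : (Posz m %| chebIter n (M %% N) x - x)%Z.
  have -> : chebIter n (M %% N) x - x =
     (chebIter n (M %% N) x - chebIter n (M %% N) (chebIter n (N * (M %/ N)) x))
     + (chebIter n M x - x) by rewrite (_ : chebIter n M x = chebIter n (M %% N) (chebIter n (N * (M %/ N)) x)) -?chebIterD -?E; ring.
  rewrite rpredD // cong_iter //.
  have := iter_period (M %/ N) HN => /dvdE [k Hk].
  apply/dvdE; exists (- k); rewrite mulNr -Hk; ring.
case: (posnP (M %% N)) => [r0|r0]; first by apply/eqP.
by move: (Hmin _ r0 (ltn_pmod M N0)); rewrite Hr.
Qed.

Lemma lp_unique n x (m N N' : nat) : least_period n x m N -> least_period n x m N' -> N = N'.
Proof.
move=> H1 H2; move/lpE: (H1) => [A1 B1 C1]; move/lpE: (H2) => [A2 B2 C2].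
apply/eqP; rewrite eqn_leq; apply/andP; split.
  by apply: dvdn_leq => //; apply: lp_dvd H1 B2.
by apply: dvdn_leq => //; apply: lp_dvd H2 B1.
Qed.

Lemma lp_exists n x (m M : nat) : (0 < M)%N -> (Posz m %| chebIter n M x - x)%Z ->
  exists N, least_period n x m N.
Proof.
move=> M0 HM.
have exP : exists k, (0 < k)%N && (Posz m %| chebIter n k x - x)%Z.
  by exists M; rewrite M0.
case: (ex_minnP exP) => N /andP [N0 HN] Hmin.
exists N; apply/lpE; split => // K K0 KN; apply/negP => HK.
by have := Hmin K; rewrite K0 HK => /(_ isT); rewrite leqNgt KN.
Qed.

Lemma zEuclid (p : nat) (a b : int) : prime p ->
  (Posz p %| a * b)%Z -> (Posz p %| a)%Z \/ (Posz p %| b)%Z.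
Proof.
move=> pr; rewrite -[(_ %| a * b)%Z]/(p %| `|(a * b)%R|)%N abszM Euclid_dvdM //.
by case/orP; [left|right].
Qed.

Lemma dvd_powcong (m a b : int) k : (m %| a - b)%Z -> (m %| a ^+ k - b ^+ k)%Z.
Proof.
move=> H; elim: k => [|k IH]; first by rewrite !expr0 subrr dvdz0.
by rewrite !exprS; apply: dvd_mulcong.
Qed.

Lemma zfermat (p : nat) (A : int) : prime p -> ~~ (Posz p %| A)%Z ->
  (Posz p %| A ^+ p.-1 - 1)%Z.
Proof.
move=> pr nA.
have p0 : Posz p != 0 by rewrite eqz_nat -lt0n prime_gt0.
have r0 : (0 <= (A %% p)%Z) by apply: modz_ge0.
have [a Ea] : exists a : nat, Posz a = (A %% p)%Z by exists `|(A %% p)%Z|%N; rewrite gez0_abs.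
have HAa : (Posz p %| A - Posz a)%Z.
  rewrite Ea {1}(divz_eq A p); apply/dvdE; exists (A %/ p)%Z; ring.
have Hf : (Posz p %| (Posz a) ^+ p - Posz a)%Z.
  rewrite -PoszX -eqz_mod_dvd; apply/eqP; rewrite !modz_nat; apply/eqP.
  by rewrite eqz_nat; apply/eqP; apply: fermat_little.
have H : (Posz p %| A * (A ^+ p.-1 - 1))%Z.
  have -> : A * (A ^+ p.-1 - 1) = (A * A ^+ p.-1 - (Posz a) ^+ p) + ((Posz a) ^+ p - Posz a) + (Posz a - A).
    by ring.
  rewrite -exprS prednK ?prime_gt0 //.
  apply: rpredD; first apply: rpredD => //; first exact: dvd_powcong.
  by move/dvdE: HAa => [k Hk]; apply/dvdE; exists (-k); rewrite mulNr -Hk; ring.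
by case: (zEuclid pr H) => //; rewrite (negbTE nA).
Qed.

Lemma chebT1 n : (chebT n).[1] = 1.
Proof.
rewrite /chebT.
have H : forall d, (cheb_pair d).1.[1] = 1 /\ (cheb_pair d).2.[1] = 1.
  elim=> [|d [IH1 IH2]] /=; first by rewrite hornerC hornerX.
  move: IH1 IH2; case: (cheb_pair d) => a b /= H1 H2.
  split => //; rewrite !hornerE /= H1 H2; ring.
by case: (H n).
Qed.

Lemma orbit_distinct n x (p N i k : nat) : least_period n x p N -> (i < k)%N -> (k < N)%N ->
  ~~ (Posz p %| chebIter n k x - chebIter n i x)%Z.
Proof.
move=> /lpE [N0 HN Hmin] ik kN; apply/negP => H.
have H1 : (Posz p %| chebIter n (N - k + i) x - x)%Z.
  have -> : chebIter n (N - k + i) x - x =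
     (chebIter n N x - x) - (chebIter n (N - k) (chebIter n k x) - chebIter n (N - k) (chebIter n i x)).
    rewrite -!chebIterD subnK ?(ltnW kN) //; ring.
  by rewrite rpredB // cong_iter.
move: (Hmin (N - k + i)%N); rewrite H1 => /(_ _ _) /negP; apply => //.
  by rewrite addn_gt0 subn_gt0 kN.
by rewrite -ltn_subRL subKn ?(ltnW kN).
Qed.

Lemma N1_bound n x (p N : nat) : prime p -> least_period n x p N -> (N <= p.-1)%N.
Proof.
move=> pr lp; move/lpE: (lp) => [N0 HN Hmin].
have p2 : (2 <= p)%N by apply: prime_gt1.
case: (leqP N 1) => [N1|N2]; first by apply: leq_trans N1 _; rewrite -ltnS prednK // ltnW.
have pz : Posz p != 0 by rewrite eqz_nat -lt0n ltnW.
pose f (i : nat) := `|(chebIter n i x %% p)%Z|%N.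
have fE i : Posz (f i) = (chebIter n i x %% p)%Z by rewrite /f gez0_abs // modz_ge0.
have fcong i k : f i = f k -> (Posz p %| chebIter n k x - chebIter n i x)%Z.
  move=> E; have : Posz (f i) = Posz (f k) by rewrite E.
  by rewrite !fE -eqz_mod_dvd => ->.
have finj : {in iota 0 N &, injective f}.
  move=> i k; rewrite !mem_iota !add0n => /andP [_ iN] /andP [_ kN] E.
  case: (ltngtP i k) => // ik.
    by move: (orbit_distinct lp ik kN); rewrite fcong.
  move: (orbit_distinct lp ik iN); rewrite fcong //.
have fne1 i : (i < N)%N -> f i != 1%N.
  move=> iN; apply/eqP => fi1.
  have H1 : (Posz p %| chebIter n i x - 1)%Z.
    have : Posz (f i) = 1 by rewrite fi1.
    have e1 : ((1:int) %% p)%Z = 1 by rewrite -[1]/(Posz 1) modz_nat modn_small.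
    by rewrite fE -eqz_mod_dvd e1 => ->.
  have H2 : (Posz p %| chebIter n i.+1 x - chebIter n i x)%Z.
    have -> : chebIter n i.+1 x - chebIter n i x =
      ((chebT n).[chebIter n i x] - (chebT n).[1]) - (chebIter n i x - 1) by rewrite chebT1 chebIterS; ring.
    by rewrite rpredB // cong_poly.
  case: (ltngtP i.+1 N) => [iN1|iN1|iN1].
      by move: (orbit_distinct lp (ltnSn i) iN1); rewrite H2.
    by exfalso; lia.
  have i0 : (0 < i)%N by rewrite -ltnS iN1.
  move: (orbit_distinct lp i0 iN) => /negP; apply.
  have -> : chebIter n i x - chebIter n 0 x =
      (chebIter n i x - chebIter n N x) + (chebIter n N x - x) by rewrite chebIter0; ring.
  rewrite rpredD // -iN1.
  have -> : chebIter n i x - chebIter n i.+1 x = - (chebIter n i.+1 x - chebIter n i x) by ring.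
  by rewrite rpredN.
have flt i : (f i < p)%N.
  rewrite -(ltz_nat) fE ltz_mod //.
set s := map f (iota 0 N).
have us : uniq s by rewrite map_inj_in_uniq // iota_uniq.
have sub : {subset s <= 0%N :: iota 2 (p - 2)}.
  move=> y /mapP [i]; rewrite mem_iota add0n => /andP [_ iN] ->.
  rewrite inE mem_iota; case: (f i) (fne1 i iN) (flt i) => [|[|k]] //= _ kp.
  by rewrite subnKC // ; rewrite ltnS in kp *; rewrite kp.
have := uniq_leq_size us sub; rewrite size_map /= !size_iota.
move=> H; lia.
Qed.

Lemma PoszS (p j : nat) : Posz (p ^ j.+1)%N = Posz (p ^ j)%N * Posz p.
Proof. by rewrite expnSr PoszM. Qed.

Lemma pos_ne0 (p j : nat) : prime p -> Posz (p ^ j)%N != 0.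
Proof. by move=> pr; rewrite eqz_nat -lt0n expn_gt0 prime_gt0. Qed.

Lemma pdvd_pow (p i j : nat) : (i <= j)%N -> (Posz (p ^ i)%N %| Posz (p ^ j)%N)%Z.
Proof. by move=> ij; rewrite -[(_ %| _)%Z]/(p ^ i %| p ^ j)%N dvdn_exp2l. Qed.

Lemma level_step n x (p j N : nat) (u : int) : prime p -> (1 <= j)%N ->
  chebIter n N x - x = Posz (p ^ j)%N * u ->
  forall t, (Posz (p ^ j.+1)%N %| chebIter n (N * t) x - x)%Z <->
            (Posz p %| u * S (mult n N x) t)%Z.
Proof.
move=> pr j1 Hu t.
have H := trans Hu t.
have Hd : (Posz (p ^ j.+1)%N %| (Posz (p ^ j)%N) ^+ 2)%Z.
  by rewrite -PoszX -expnM pdvd_pow //; lia.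
have H' := dvdz_trans Hd H.
have E : (Posz (p ^ j.+1)%N %| chebIter n (N * t) x - x)%Z =
         (Posz (p ^ j.+1)%N %| Posz (p ^ j)%N * (u * S (mult n N x) t))%Z.
  apply/idP/idP => K.
    have -> : Posz (p ^ j)%N * (u * S (mult n N x) t) =
      (chebIter n (N * t) x - x) - (chebIter n (N * t) x - x - Posz (p ^ j)%N * u * S (mult n N x) t) by ring.
    by rewrite rpredB.
  have -> : chebIter n (N * t) x - x =
     (chebIter n (N * t) x - x - Posz (p ^ j)%N * u * S (mult n N x) t) + Posz (p ^ j)%N * (u * S (mult n N x) t) by ring.
  by rewrite rpredD.
by rewrite E PoszS dvdz_mul2l ?pos_ne0.
Qed.

Lemma level_step2 n x (p j N : nat) (u : int) : prime p -> (2 <= j)%N ->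
  chebIter n N x - x = Posz (p ^ j)%N * u ->
  forall t, (Posz (p ^ j.+2)%N %|
     chebIter n (N * t) x - x - Posz (p ^ j)%N * u * S (mult n N x) t)%Z.
Proof.
move=> pr j2 Hu t.
apply: dvdz_trans (trans Hu t).
by rewrite -PoszX -expnM pdvd_pow //; lia.
Qed.

Lemma S_p (p : nat) (A : int) : prime p -> (2 < p)%N -> (Posz p %| A - 1)%Z ->
  exists c, S A p = Posz p + Posz p ^+ 2 * c.
Proof.
move=> pr p2 /dvdE [s Hs].
have -> : A = 1 + Posz p * s by rewrite mulrC -Hs; ring.
have := S3 (Posz p) s p => /dvdE [k Hk].
have /dvdnP [l Hl] : (p %| 'C(p, 2))%N by apply: prime_dvd_bin => //; apply/andP; split.
exists (k + s * Posz l).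
have -> : S (1 + Posz p * s) p = k * Posz p ^+ 2 + Posz p + Posz p * s * Posz 'C(p, 2) by rewrite -Hk; ring.
rewrite Hl PoszM; ring.
Qed.

Lemma dvd_nat_lt (p t : nat) : (0 < t)%N -> (t < p)%N -> ~~ (Posz p %| Posz t)%Z.
Proof.
move=> t0 tp; rewrite -[(_ %| _)%Z]/(p %| t)%N; apply/negP => /dvdn_leq.
by move/(_ t0); rewrite leqNgt tp.
Qed.

Lemma grow n x (p j N : nat) : prime p -> (2 < p)%N -> (2 <= j)%N ->
  least_period n x (p ^ j) N ->
  ~~ (Posz (p ^ j.+1)%N %| chebIter n N x - x)%Z ->
  (Posz p %| mult n N x - 1)%Z ->
  [/\ least_period n x (p ^ j.+1) (N * p),
      ~~ (Posz (p ^ j.+2)%N %| chebIter n (N * p) x - x)%Z &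
      (Posz p %| mult n (N * p) x - 1)%Z].
Proof.
move=> pr p2 j2 lp nd A1.
move/lpE: (lp) => [N0 HN Hmin].
move/dvdE: (HN) => [u Hu]; rewrite mulrC in Hu.
have j1 : (1 <= j)%N by apply: leq_trans j2.
have pu : ~~ (Posz p %| u)%Z.
  apply/negP => /dvdE [v Hv]; move/negP: nd; apply; rewrite Hu Hv PoszS.
  by apply/dvdE; exists v; ring.
have [c Hc] := S_p pr p2 A1.
have H2 := level_step2 pr j2 Hu p; rewrite Hc in H2.
move/dvdE: H2 => [K HK].
have ER : chebIter n (N * p) x - x =
   Posz (p ^ j.+1)%N * (u + Posz (p ^ 1)%N * (K + u * c)).
  have -> : chebIter n (N * p) x - x = K * Posz (p ^ j.+2)%N +
     Posz (p ^ j)%N * u * (Posz p + Posz p ^+ 2 * c) by rewrite -HK; ring.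
  rewrite !PoszS expn0 mul1r expr2; ring.
have pj1 : (Posz p %| chebIter n N x - x)%Z.
  by rewrite Hu; apply: dvdz_mulr; rewrite -[Posz p]/(Posz (p ^ 1)%N) pdvd_pow.
split.
- apply/lpE; split; first by rewrite muln_gt0 N0 prime_gt0.
    by rewrite ER; apply: dvdz_mulr.
  move=> M M0 MNp; apply/negP => HM.
  have HMj : (Posz (p ^ j)%N %| chebIter n M x - x)%Z.
    by apply: dvdz_trans HM; apply: pdvd_pow.
  have /dvdnP [t Et] := lp_dvd lp HMj.
  rewrite Et mulnC in HM MNp M0.
  have t0 : (0 < t)%N by move: M0; rewrite muln_gt0 => /andP [].
  have tp : (t < p)%N by rewrite -(ltn_pmul2l N0).
  move/(level_step pr j1 Hu t): HM => Hut.
  have Ht := S2 t A1.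
  have : (Posz p %| u * Posz t)%Z.
    have -> : u * Posz t = u * S (mult n N x) t - u * (S (mult n N x) t - Posz t) by ring.
    by rewrite rpredB // dvdz_mull.
  case/(zEuclid pr) => K2; first by rewrite K2 in pu.
  by move: (dvd_nat_lt t0 tp); rewrite K2.
- rewrite ER (PoszS p j.+1); apply/negP; rewrite dvdz_mul2l ?pos_ne0 //.
  move/dvdE => [v Hv]; move/negP: pu; apply; apply/dvdE.
  exists (v - (K + u * c)); rewrite mulrBl -Hv expn1; ring.
- have H := mult_pow p pj1.
  have H' : (Posz p %| (mult n N x) ^+ p - 1)%Z.
    by rewrite -(expr1n _ p); apply: dvd_powcong.
  have -> : mult n (N * p) x - 1 = (mult n (N * p) x - mult n N x ^+ p) + (mult n N x ^+ p - 1) by ring.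
  by rewrite rpredD.
Qed.

Lemma S_p0 (p : nat) (A : int) t : (Posz p %| A)%Z -> (Posz p %| S A t.+1 - 1)%Z.
Proof.
move=> H; rewrite /= (_ : 1 + A * S A t - 1 = A * S A t); last by ring.
exact: dvdz_mulr.
Qed.

Lemma lp_lift n x (p j N : nat) : least_period n x (p ^ j) N ->
  (Posz (p ^ j.+1)%N %| chebIter n N x - x)%Z -> least_period n x (p ^ j.+1) N.
Proof.
move=> /lpE [N0 HN Hmin] H; apply/lpE; split => // M M0 MN; apply/negP => HM.
move/negP: (Hmin M M0 MN); apply; apply: dvdz_trans HM; exact: pdvd_pow.
Qed.

Definition Inv n x (p j : nat) := exists N, least_period n x (p ^ j) N /\
  ( ((2 <= j)%N /\ ~~ (Posz (p ^ j.+1)%N %| chebIter n N x - x)%Z /\ (Posz p %| mult n N x - 1)%Z)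
  \/ (N <= p.-1)%N
  \/ ((Posz p %| mult n N x - 1)%Z /\ (N <= p * p.-1)%N) ).

Lemma p1_le (p : nat) : prime p -> ~~ (Posz p %| 1)%Z.
Proof. by move=> pr; rewrite -[(_ %| _)%Z]/(p %| 1)%N Euclid_dvd1. Qed.

Lemma handlerB n x (p j N : nat) : prime p -> (2 < p)%N -> (1 <= j)%N ->
  least_period n x (p ^ j) N -> (N <= p.-1)%N ->
  (exists M, (0 < M)%N /\ (Posz (p ^ j.+1)%N %| chebIter n M x - x)%Z) ->
  Inv n x p j.+1.
Proof.
move=> pr p2 j1 lp Np [M [M0 HM]].
move/lpE: (lp) => [N0 HN Hmin].
move/dvdE: (HN) => [u Hu]; rewrite mulrC in Hu.
case: (boolP (Posz (p ^ j.+1)%N %| chebIter n N x - x)%Z) => Hd.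
  by exists N; split; [apply: lp_lift | right; left].
have pu : ~~ (Posz p %| u)%Z.
  apply/negP => /dvdE [v Hv]; move/negP: Hd; apply; rewrite Hu Hv PoszS.
  by apply/dvdE; exists v; ring.
have [N' lp'] := lp_exists M0 HM.
move/lpE: (lp') => [N'0 HN' Hmin'].
have /dvdnP [t Et] : (N %| N')%N.
  by apply: (lp_dvd lp); apply: dvdz_trans HN'; apply: pdvd_pow.
rewrite mulnC in Et; subst N'.
have t0 : (0 < t)%N by move: N'0; rewrite muln_gt0 => /andP [].
have HuS : (Posz p %| u * S (mult n N x) t)%Z by apply/(level_step pr j1 Hu t).
have HS : (Posz p %| S (mult n N x) t)%Z.
  by case: (zEuclid pr HuS) => // K; rewrite K in pu.
have pj1 : (Posz p %| chebIter n N x - x)%Z.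
  by rewrite Hu; apply: dvdz_mulr; rewrite -[Posz p]/(Posz (p ^ 1)%N) pdvd_pow.
have HA' := mult_pow t pj1.
set A := mult n N x in HuS HS HA' *.
have p0 : (0 < p)%N by apply: prime_gt0.
exists (N * t); split => //; right; right.
case: (boolP (Posz p %| A - 1)%Z) => HA1.
  split.
    have -> : mult n (N * t) x - 1 = (mult n (N * t) x - A ^+ t) + (A ^+ t - 1 ^+ t) by rewrite expr1n; ring.
    by rewrite rpredD // dvd_powcong.
  have HSp : (Posz p %| u * S A p)%Z.
    apply: dvdz_mull; have := S2 p HA1.
    move=> K; have -> : S A p = (S A p - Posz p) + Posz p by ring.
    by rewrite rpredD // dvdzz.
  have /(level_step pr j1 Hu p) Hp := HSp.
  have K2 : (N * t <= N * p)%N.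
    by apply: dvdn_leq; [rewrite muln_gt0 N0 p0 | apply: (lp_dvd lp')].
  apply: leq_trans K2 _; rewrite mulnC leq_mul2l Np orbT //.
have HAt : (Posz p %| A ^+ t - 1)%Z.
  by rewrite -S1; apply: dvdz_mull.
split.
  have -> : mult n (N * t) x - 1 = (mult n (N * t) x - A ^+ t) + (A ^+ t - 1) by ring.
  by rewrite rpredD.
have pA : ~~ (Posz p %| A)%Z.
  apply/negP => K; clear Hmin' HN' N'0 lp' HA' HuS; case: t t0 HS HAt => // t' _ HS _.
  have K2 := S_p0 t' K.
  have E : S A t'.+1 - (S A t'.+1 - 1) = 1 by ring.
  have K3 : (Posz p %| S A t'.+1 - (S A t'.+1 - 1))%Z by rewrite rpredB.
  by move: K3; rewrite E; apply/negP; apply: p1_le.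
have HF := zfermat pr pA.
rewrite -S1 in HF.
have HSp : (Posz p %| S A p.-1)%Z.
  by case: (zEuclid pr HF) => // K; rewrite K in HA1.
have /(level_step pr j1 Hu p.-1) Hp : (Posz p %| u * S A p.-1)%Z by apply: dvdz_mull.
have K2 : (N * t <= N * p.-1)%N.
  apply: dvdn_leq; last by apply: (lp_dvd lp').
  by rewrite muln_gt0 N0 /= -subn1 subn_gt0 ltnW.
apply: leq_trans K2 _; apply: leq_mul => //; apply: leq_trans Np (leq_pred p).
Qed.

Lemma inv_step n x (p j : nat) : prime p -> (2 < p)%N -> (1 <= j)%N -> Inv n x p j ->
  (exists M, (0 < M)%N /\ (Posz (p ^ j.+1)%N %| chebIter n M x - x)%Z) ->
  Inv n x p j.+1.
Proof.
move=> pr p2 j1 [N [lp [[j2 [nd A1]] | [Np | [A1 Np]]]]] Hex.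
- have [lp' nd' A1'] := grow pr p2 j2 lp nd A1.
  by exists (N * p); split => //; left; split => //; apply: leqW.
- exact: handlerB pr p2 j1 lp Np Hex.
- case: (boolP (Posz (p ^ j.+1)%N %| chebIter n N x - x)%Z) => Hd.
    by exists N; split; [apply: lp_lift | right; right; split].
  case: (leqP 2 j) => j2.
    have [lp' nd' A1'] := grow pr p2 j2 lp Hd A1.
    by exists (N * p); split => //; left; split => //; apply: leqW.
  have ej : j = 1%N by apply/eqP; rewrite eqn_leq j1 -ltnS j2.
  subst j.
  have lp1 : least_period n x p N by move: lp; rewrite expn1.
  have Np1 := N1_bound pr lp1.
  exact: handlerB pr p2 (leqnn 1) lp Np1 Hex.
Qed.

Theorem corollary1 (p n : nat) (x : nat) (w Nc : nat) :
  prime p -> (3 < p)%N -> (1 < n)%N ->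
  coprime n p -> coprime n (p ^ 2 - 1) ->
  (0 < w)%N ->
  least_period n (Posz x) (p ^ w) Nc ->
  (p ^ 2 <= Nc)%N ->
  forall k : nat, (w <= k)%N ->
    least_period n (Posz x) (p ^ k) (Nc * p ^ (k - w)).
Proof.
move=> pr p3 n1 cop1 cop2 w0 lpw Nc2 k wk.
have p2 : (2 < p)%N by apply: ltnW.
move/lpE: (lpw) => [Nc0 HNc _].
have Hex j : (j <= w)%N ->
    exists M, (0 < M)%N /\ (Posz (p ^ j)%N %| chebIter n M (Posz x) - Posz x)%Z.
  by move=> jw; exists Nc; split => //; apply: dvdz_trans HNc; apply: pdvd_pow.
have HInv : forall j, (1 <= j)%N -> (j <= w)%N -> Inv n (Posz x) p j.
  elim => [//|j IH] _ jw.
  case: (posnP j) => [j0|j0].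
    subst j; have [M [M0 HM]] := Hex 1%N jw.
    have [N lp] := lp_exists M0 HM.
    have lp1 : least_period n (Posz x) p N by move: lp; rewrite expn1.
    by exists N; split => //; right; left; apply: N1_bound pr lp1.
  exact: inv_step pr p2 j0 (IH j0 (ltnW jw)) (Hex _ jw).
have [N [lp Hc]] := HInv w w0 (leqnn w).
have eN := lp_unique lp lpw; subst N.
have [j2 [nd A1]] : [/\ (2 <= w)%N, ~~ (Posz (p ^ w.+1)%N %| chebIter n Nc (Posz x) - Posz x)%Z
                     & (Posz p %| mult n Nc (Posz x) - 1)%Z].
  case: Hc => [[? [? ?]] //|[Np|[_ Np]]]; exfalso; clear -Np Nc2 p2; nia.
have G : forall d, [/\ least_period n (Posz x) (p ^ (w + d)) (Nc * p ^ d),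
    ~~ (Posz (p ^ (w + d).+1)%N %| chebIter n (Nc * p ^ d) (Posz x) - Posz x)%Z &
    (Posz p %| mult n (Nc * p ^ d) (Posz x) - 1)%Z].
  elim => [|d [lp' nd' A1']]; first by rewrite addn0 expn0 muln1.
  have j2' : (2 <= w + d)%N by apply: leq_trans j2 (leq_addr _ _).
  have [l1 l2 l3] := grow pr p2 j2' lp' nd' A1'.
  by rewrite addnS (expnSr p d) mulnA.
have [lpk _ _] := G (k - w)%N.
by rewrite subnKC in lpk.
Qed.
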